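(* Let $A,B\subset\mathbb R^p$ be two disjoint compact sets of Lebesgue measure $0$, and let $C\in\mathbb R$. Then the set $D=\{\mathbf x\in\mathbb R^p: d(\mathbf x,A)^2-d(\mathbf x,B)^2=C\}$ has Lebesgue measure $0$.
   Context: For $\mathbf x\in\mathbb R^p$ and $A\subset\mathbb R^p$, $d(\mathbf x,A)=\inf_{\mathbf y\in A}\|\mathbf x-\mathbf y\|$ (Euclidean distance). *)

(* Defs.v *)
(* R^p is 'rV[R]_p for R : realType. *)
From HB Require Import structures.
From mathcomp Require Import all_boot all_order all_algebra.
From mathcomp Require Import all_classical all_reals all_analysis.
Set Implicit Arguments. Unset Strict Implicit. Unset Printing Implicit Defensive.
Import Order.TTheory GRing.Theory Num.Theory.
Import numFieldTopology.Exports numFieldNormedType.Exports.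
Local Open Scope ring_scope.
Local Open Scope classical_set_scope.

Definition edist (R : realType) (p : nat) (x y : 'rV[R]_p) : R :=
  Num.sqrt (\sum_(i < p) (x ord0 i - y ord0 i) ^+ 2).

Definition setdist (R : realType) (p : nat) (x : 'rV[R]_p) (A : set 'rV[R]_p) : R :=
  inf [set edist x y | y in A].

Definition box (R : realType) (p : nat) (a b : 'rV[R]_p) : set 'rV[R]_p :=
  [set x | forall i : 'I_p, a ord0 i <= x ord0 i <= b ord0 i].
Definition box_vol (R : realType) (p : nat) (a b : 'rV[R]_p) : R :=
  \prod_(i < p) (b ord0 i - a ord0 i).

Definition lebesgue_null (R : realType) (p : nat) (S : set 'rV[R]_p) : Prop :=
  forall eps : R, 0 < eps ->
    exists a b : nat -> 'rV[R]_p,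
      (forall n (i : 'I_p), a n ord0 i <= b n ord0 i) /\
      S `<=` \bigcup_n box (a n) (b n) /\
      (forall N : nat, \sum_(n < N) box_vol (a n) (b n) <= eps).

(* Main.v *)
Require Import Defs.
From HB Require Import structures.
From mathcomp Require Import all_boot all_order all_algebra.
From mathcomp Require Import all_classical all_reals all_analysis.
From mathcomp Require Import ring lra.
Import Order.TTheory GRing.Theory Num.Theory.
Import numFieldTopology.Exports numFieldNormedType.Exports.
Local Open Scope ring_scope.
Local Open Scope classical_set_scope.

Lemma null_sub (R : realType) (p : nat) (S T : set 'rV[R]_p) :
  S `<=` T -> lebesgue_null T -> lebesgue_null S.
Proof.
move=> ST hT eps he; have [a [b [hab [cov hs]]]] := hT eps he.
by exists a, b; split=> //; split=> // x /ST /cov.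
Qed.

Lemma box_vol_ge0 (R : realType) (p : nat) (a b : 'rV[R]_p) :
  (forall i, a ord0 i <= b ord0 i) -> 0 <= box_vol a b.
Proof. by move=> h; apply: prodr_ge0 => i _; rewrite subr_ge0. Qed.

Lemma box_vol0 (R : realType) (p : nat) : (0 < p)%N ->
  box_vol (0 : 'rV[R]_p) 0 = 0.
Proof.
move=> hp; rewrite /box_vol; case: p hp => // p _.
by rewrite big_ord_recl !mxE subrr mul0r.
Qed.

Lemma sum_uniq_sub (R : realType) (T : eqType) (s s' : seq T) (F : T -> R) :
  uniq s -> uniq s' -> {subset s <= s'} -> (forall t, 0 <= F t) ->
  \sum_(t <- s) F t <= \sum_(t <- s') F t.
Proof.
move=> us us' ss' F0.
rewrite [X in _ <= X](bigID (fun t => t \in s)) /=.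
have -> : \sum_(t <- s' | t \in s) F t = \sum_(t <- s) F t.
  rewrite -big_filter; apply: perm_big; apply: uniq_perm.
  - exact: filter_uniq.
  - exact: us.
  by move=> t; rewrite mem_filter; apply/andP/idP => [[]//|ts]; split=> //; apply: ss'.
by rewrite lerDl sumr_ge0.
Qed.

Lemma geom_half (R : realType) (eps : R) (M : nat) : 0 <= eps ->
  \sum_(k < M) eps / 2 ^+ k.+1 <= eps.
Proof.
move=> he.
suff h : \sum_(k < M) eps / 2 ^+ k.+1 = eps - eps / 2 ^+ M.
  by rewrite h lerBlDr lerDl divr_ge0 // exprn_ge0.
elim: M => [|M IH]; first by rewrite big_ord0 expr0 divr1 subrr.
rewrite big_ord_recr /= IH exprS.
have h2 : (2 : R) ^+ M != 0 by rewrite expf_neq0.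
field; by rewrite h2.
Qed.

Lemma null_bigcup (R : realType) (p : nat) (S : nat -> set 'rV[R]_p) :
  (0 < p)%N -> (forall k, lebesgue_null (S k)) -> lebesgue_null (\bigcup_k S k).
Proof.
move=> hp hS eps he.
have /choice [F hF] : forall k, exists ab : (nat -> 'rV[R]_p) * (nat -> 'rV[R]_p),
    (forall n i, ab.1 n ord0 i <= ab.2 n ord0 i) /\
    S k `<=` \bigcup_n box (ab.1 n) (ab.2 n) /\
    (forall N, \sum_(n < N) box_vol (ab.1 n) (ab.2 n) <= eps / 2 ^+ k.+1).
  move=> k; have he2 : 0 < eps / 2 ^+ k.+1 by rewrite divr_gt0 // exprn_gt0.
  have [a [b h]] := hS k _ he2.
  by exists (a, b).
pose a n := if (pickle_inv n : option (nat * nat)) is Some t then (F t.1).1 t.2 else 0.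
pose b n := if (pickle_inv n : option (nat * nat)) is Some t then (F t.1).2 t.2 else 0.
pose V (t : nat * nat) := box_vol ((F t.1).1 t.2) ((F t.1).2 t.2).
have V0 t : 0 <= V t by apply: box_vol_ge0 => i; exact: (hF t.1).1.
exists a, b; split; [|split].
- move=> n i; rewrite /a /b; case: (pickle_inv n) => [t|]; first exact: (hF t.1).1.
  by rewrite mxE.
- move=> x [k _ /((hF k).2.1) [m _ hx]]; exists (pickle (k, m)) => //.
  by rewrite /a /b pickleK_inv.
move=> N.
have -> : \sum_(n < N) box_vol (a n) (b n) =
    \sum_(t <- pmap (pickle_inv : nat -> option (nat * nat)) (iota 0 N)) V t.
  rewrite -(big_mkord xpredT (fun n => box_vol (a n) (b n))) /index_iota subn0.
  elim: (iota 0 N) => [|n s IH]; first by rewrite !big_nil.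
  rewrite big_cons /= IH /a /b; case: (pickle_inv n) => [t|] /=.
    by rewrite big_cons.
  by rewrite box_vol0 // add0r.
set s1 := pmap _ _.
have us1 : uniq s1 by apply: (pmap_uniq (@pickle_invK _)); exact: iota_uniq.
pose M := (\max_(t <- s1) maxn t.1 t.2).+1.
have hM t : t \in s1 -> (t.1 < M)%N /\ (t.2 < M)%N.
  move=> ts; have := @leq_bigmax_seq _ s1 xpredT (fun t : nat * nat => maxn t.1 t.2) t ts isT.
  by rewrite /M => h; rewrite !ltnS; split; apply: leq_trans h; rewrite ?leq_maxl ?leq_maxr.
pose s' := [seq (x, y) | x <- iota 0 M, y <- iota 0 M].
apply: (@le_trans _ _ (\sum_(t <- s') V t)).
  apply: sum_uniq_sub => //.
    apply: allpairs_uniq; try exact: iota_uniq.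
    by move=> [x1 y1] [x2 y2] _ _.
  move=> [x y] /hM /= [hx hy]; apply: allpairs_f; by rewrite mem_iota.
rewrite big_allpairs.
apply: (@le_trans _ _ (\sum_(k < M) eps / 2 ^+ k.+1)); last by apply: geom_half; exact: ltW.
rewrite -(big_mkord xpredT (fun k => eps / 2 ^+ k.+1)) /index_iota subn0.
apply: ler_sum => k _.
have := (hF k).2.2 M.
by rewrite -(big_mkord xpredT (fun m => box_vol ((F k).1 m) ((F k).2 m))) /index_iota subn0.
Qed.

Lemma null_set0 (R : realType) (p : nat) : (0 < p)%N -> lebesgue_null (set0 : set 'rV[R]_p).
Proof.
move=> hp eps he; exists (fun=> 0), (fun=> 0); split; [|split].
- by move=> n i; rewrite mxE.
- by [].
by move=> N; rewrite big1 ?ltW // => n _; rewrite box_vol0.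
Qed.

Lemma null_bigcup_count (R : realType) (p : nat) (T : countType) (P : T -> set 'rV[R]_p) :
  (0 < p)%N -> (forall t, lebesgue_null (P t)) -> lebesgue_null (\bigcup_t P t).
Proof.
move=> hp hP.
pose S k := if (pickle_inv k : option T) is Some t then P t else set0.
apply: (@null_sub _ _ _ (\bigcup_k S k)).
  by move=> x [t _ hx]; exists (pickle t) => //; rewrite /S pickleK_inv.
apply: null_bigcup => // k; rewrite /S; case: (pickle_inv k) => [t|] //.
exact: null_set0.
Qed.

Lemma sum_trunc (R : realType) (F : nat -> R) (sz N : nat) : (forall n, 0 <= F n) ->
  \sum_(n < N) (if (n < sz)%N then F n else 0) <= \sum_(n < sz) F n.
Proof.
move=> F0.
rewrite -(big_mkord xpredT (fun n => if (n < sz)%N then F n else 0)) -(big_mkord xpredT F).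
case: (leqP N sz) => hN.
  rewrite (big_cat_nat (leq0n N) hN) /=.
  rewrite [X in X <= _]big_nat_cond [X in _ <= X + _]big_nat_cond.
  rewrite -[X in X <= _]addr0 lerD //.
    apply: ler_sum => n /andP [/andP [_ hn] _]; by rewrite (leq_trans hn hN).
  by apply: sumr_ge0 => n _; apply: F0.
rewrite (big_cat_nat (leq0n sz) (ltnW hN)) /=.
have -> : \sum_(sz <= i < N) (if (i < sz)%N then F i else 0) = 0.
  by rewrite big_nat_cond big1 // => n /andP [/andP [hn _] _]; rewrite ltnNge hn.
rewrite addr0 big_nat_cond [X in _ <= X]big_nat_cond.
by apply: ler_sum => n /andP [/andP [_ hn] _]; rewrite hn.
Qed.

Lemma sum_ne_le (R : realType) (p : nat) (i : 'I_p) (F : 'I_p -> R) :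
  (forall j, 0 <= F j) -> \sum_(j | j != i) F j <= \sum_j F j.
Proof. by move=> F0; rewrite [X in _ <= X](bigD1 i) //= lerDr. Qed.

Lemma single_le_sum (R : realType) (p : nat) (i : 'I_p) (F : 'I_p -> R) :
  (forall j, 0 <= F j) -> F i <= \sum_j F j.
Proof. by move=> F0; rewrite (bigD1 i) //= lerDl sumr_ge0. Qed.

Lemma graph_null (R : realType) (p : nat) (S : set 'rV[R]_p) (i : 'I_p) (Rb L : R) :
  0 <= L -> (forall x, S x -> forall j, `|x ord0 j| <= Rb) ->
  (forall x y, S x -> S y ->
     `|y ord0 i - x ord0 i| <= L * \sum_(j | j != i) `|y ord0 j - x ord0 j|) ->
  lebesgue_null S.
Proof.
move=> L0 hB0 hG eps he.
pose R1 := `|Rb|.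
have hB x : S x -> forall j, `|x ord0 j| <= R1.
  by move=> Sx j; apply: le_trans (hB0 x Sx j) _; exact: ler_norm.
have R10 : 0 <= R1 by exact: normr_ge0.
pose c := 2 * L * p%:R * (2 * R1 + 1) ^+ p.-1.
have c0 : 0 <= c by rewrite /c !mulr_ge0 ?exprn_ge0 ?addr_ge0 ?mulr_ge0.
pose h := Num.min 1 (eps / (c + 1)).
have h0 : 0 < h by rewrite /h lt_min ltr01 divr_gt0 // ltr_wpDl.
have h1 : h <= 1 by rewrite /h ge_min lexx.
have hc : h * c <= eps.
  apply: (@le_trans _ _ (eps / (c + 1) * c)).
    by apply: ler_wpM2r => //; rewrite /h ge_min lexx orbT.
  rewrite mulrAC ler_pdivrMr ?ltr_wpDl // ler_wpM2l ?ltW //.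
  by rewrite ltrDl ltr01.
pose M := (Num.trunc (2 * R1 / h)).+1.
pose W := L * p%:R * h.
have W0 : 0 <= W by rewrite /W !mulr_ge0 // ltW.
pose lo (k : 'I_M) := - R1 + k%:R * h.
pose incol (cc : {ffun 'I_p -> 'I_M}) (y : 'rV[R]_p) :=
  forall j, j != i -> lo (cc j) <= y ord0 j <= lo (cc j) + h.
have /choice [sf hsf] : forall cc : {ffun 'I_p -> 'I_M}, exists y : 'rV[R]_p,
    (exists z, S z /\ incol cc z) -> S y /\ incol cc y.
  move=> cc; case: (pselect (exists z, S z /\ incol cc z)) => [[z hz]|n].
    by exists z.
  by exists 0.
pose aC (cc : {ffun 'I_p -> 'I_M}) : 'rV[R]_p := \row_j
  (if j == i then (if cc i == ord0 then sf cc ord0 i - W else 0) else lo (cc j)).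
pose bC (cc : {ffun 'I_p -> 'I_M}) : 'rV[R]_p := \row_j
  (if j == i then (if cc i == ord0 then sf cc ord0 i + W else 0) else lo (cc j) + h).
pose g (j : 'I_p) (k : 'I_M) : R := if j == i then (if k == ord0 then 2 * W else 0) else h.
have volC cc : box_vol (aC cc) (bC cc) = \prod_j g j (cc j).
  apply: eq_bigr => j _; rewrite !mxE /g.
  case: eqP => [->|_]; last by rewrite addrAC subrr add0r.
  case: (cc i == ord0); last by rewrite subrr.
  by ring.
pose e := enum {ffun 'I_p -> 'I_M}.
pose cz : {ffun 'I_p -> 'I_M} := [ffun => ord0].
pose a n := if (n < size e)%N then aC (nth cz e n) else 0.
pose b n := if (n < size e)%N then bC (nth cz e n) else 0.
have hab cc j : aC cc ord0 j <= bC cc ord0 j.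
  rewrite !mxE; case: eqP => _; last by rewrite lerDl ltW.
  by case: ifP => _ //; rewrite lerD2l -subr_ge0 opprK addr_ge0.
exists a, b; split; [|split].
- by move=> n j; rewrite /a /b; case: ifP => _; [exact: hab|rewrite mxE].
- move=> x Sx.
  pose cx : {ffun 'I_p -> 'I_M} := [ffun j => if j == i then ord0
                       else inord (Num.trunc ((x ord0 j + R1) / h))].
  have incx : incol cx x.
    move=> j /negbTE ji; rewrite /lo ffunE ji.
    have := hB x Sx j; rewrite ler_norml => /andP [hx1 hx2].
    set v := (x ord0 j + R1) / h.
    have v0 : 0 <= v by apply: divr_ge0; [lra|exact: ltW].
    have kM : (Num.trunc v < M)%N.
      rewrite ltnS; apply: le_truncn; apply: ler_wpM2r; last lra.
      by rewrite invr_ge0 ltW.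
    rewrite inordK //.
    have e1 : v * h = x ord0 j + R1 by rewrite /v divfK ?gt_eqF.
    have := truncn_itv v0 => /andP [t1 t2].
    have u1 := ler_wpM2r (ltW h0) t1.
    have u2 := ltr_pM2r h0 _ _; move: (u2 v (Num.trunc v).+1%:R); rewrite t2.
    rewrite -natr1 mulrDl mul1r => u3.
    apply/andP; split; lra.
  have [Ss ins] := hsf cx (ex_intro _ x (conj Sx incx)).
  set s := sf cx in Ss ins.
  have dist j : j != i -> `|x ord0 j - s ord0 j| <= h.
    move=> ji; have /andP [a1 a2] := incx j ji; have /andP [b1 b2] := ins j ji.
    rewrite ler_norml; apply/andP; split; lra.
  have hxi : `|x ord0 i - s ord0 i| <= W.
    apply: le_trans (hG s x Ss Sx) _; rewrite /W -mulrA ler_wpM2l //.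
    apply: (@le_trans _ _ (\sum_(j | j != i) h)).
      by apply: ler_sum => j ji; exact: dist.
    apply: (le_trans (@sum_ne_le R p i (fun=> h) _)); first by move=> _; exact: ltW.
    by rewrite sumr_const card_ord mulr_natl.
  exists (index cx e) => //.
  have he' : (index cx e < size e)%N by rewrite index_mem mem_enum.
  rewrite /a /b he' nth_index ?mem_enum // => j.
  rewrite !mxE; case: eqP => [->|/eqP ji]; last exact: incx.
  rewrite /cx ffunE eqxx /= -/s.
  move: hxi; rewrite ler_norml => /andP [z1 z2]; apply/andP; split; lra.
move=> N.
have -> : \sum_(n < N) box_vol (a n) (b n) =
    \sum_(n < N) (if (n < size e)%N then box_vol (aC (nth cz e n)) (bC (nth cz e n)) else 0).
  by apply: eq_bigr => n _; rewrite /a /b; case: ifP => _ //; rewrite box_vol0 // (leq_ltn_trans (leq0n _) (ltn_ord i)).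
apply: (le_trans (@sum_trunc R (fun n => box_vol (aC (nth cz e n)) (bC (nth cz e n))) (size e) N _)).
  by move=> n; apply: box_vol_ge0 => j; exact: hab.
rewrite -(big_mkord xpredT (fun n => box_vol (aC (nth cz e n)) (bC (nth cz e n)))).
rewrite -(big_nth cz xpredT (fun cc => box_vol (aC cc) (bC cc))).
rewrite /e big_enum /=.
rewrite (eq_bigr _ (fun cc _ => volC cc)) -bigA_distr_bigA /=.
have -> : \prod_j \sum_k g j k = \prod_(j < p) (if j == i then 2 * W else M%:R * h).
  apply: eq_bigr => j _; rewrite /g; case: eqP => _.
    by rewrite (bigD1 ord0) //= big1 ?addr0 // => k /negbTE ->.
  by rewrite sumr_const card_ord mulr_natl.
rewrite (bigD1 i) //= eqxx.
rewrite (eq_bigr (fun=> M%:R * h)); last by move=> j /negbTE ->.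
rewrite prodr_const cardC1 card_ord.
have Mh : M%:R * h <= 2 * R1 + 1.
  have z0 : 0 <= 2 * R1 / h by apply: divr_ge0; [apply: mulr_ge0|exact: ltW].
  have /andP [t1 _] := truncn_itv z0.
  rewrite /M -natr1 mulrDl mul1r.
  have := ler_wpM2r (ltW h0) t1; rewrite divfK ?gt_eqF // => u.
  lra.
apply: (@le_trans _ _ (2 * W * (2 * R1 + 1) ^+ p.-1)).
  apply: ler_wpM2l; first by apply: mulr_ge0.
  apply: lerXn2r; rewrite ?nnegrE //; [apply: mulr_ge0 =>//; exact: ltW|lra].
apply: le_trans hc; rewrite /c /W le_eqVlt; apply/orP; left; apply/eqP; ring.
Qed.

Definition sqd (R : realType) (p : nat) (x y : 'rV[R]_p) : R :=
  \sum_(j < p) (x ord0 j - y ord0 j) ^+ 2.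
Arguments sqd {R p}.

Lemma sqd_ge0 (R : realType) (p : nat) (x y : 'rV[R]_p) : 0 <= sqd x y.
Proof. by apply: sumr_ge0 => j _; exact: sqr_ge0. Qed.

Lemma sqd_cont (R : realType) (p : nat) (x : 'rV[R]_p) : continuous (sqd x).
Proof.
have hc j : continuous (fun y : 'rV[R]_p => (x ord0 j - y ord0 j) ^+ 2).
  have -> : (fun y : 'rV[R]_p => (x ord0 j - y ord0 j) ^+ 2) =
            (fun y => (x ord0 j - y ord0 j) * (x ord0 j - y ord0 j)).
    by apply/funext => y; rewrite expr2.
  move=> y.
  have hb : {for y, continuous (fun y : 'rV[R]_p => x ord0 j - y ord0 j)}.
    apply: (@continuousB R R _ (fun=> x ord0 j) (fun y : 'rV[R]_p => y ord0 j)).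
      exact: cst_continuous.
    exact: coord_continuous.
  exact: (@continuousM R _ (fun y : 'rV[R]_p => x ord0 j - y ord0 j) _ y hb hb).
suff gen : forall s : seq 'I_p,
    continuous (fun y : 'rV[R]_p => \sum_(j <- s) (x ord0 j - y ord0 j) ^+ 2).
  exact: gen.
elim => [|j s IH].
  have -> : (fun y : 'rV[R]_p => \sum_(j <- [::]) (x ord0 j - y ord0 j) ^+ 2) = (fun=> 0).
    by apply/funext => y; rewrite big_nil.
  exact: cst_continuous.
have -> : (fun y : 'rV[R]_p => \sum_(k <- j :: s) (x ord0 k - y ord0 k) ^+ 2) =
   (fun y => (x ord0 j - y ord0 j) ^+ 2 + \sum_(k <- s) (x ord0 k - y ord0 k) ^+ 2).
  by apply/funext => y; rewrite big_cons.
move=> y; apply: (@continuousD R R _ (fun y : 'rV[R]_p => (x ord0 j - y ord0 j) ^+ 2)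
  (fun y => \sum_(k <- s) (x ord0 k - y ord0 k) ^+ 2)); [exact: hc|exact: IH].
Qed.

Lemma exists_min (R : realType) (p : nat) (A : set 'rV[R]_p) (x : 'rV[R]_p) :
  A !=set0 -> compact A -> exists a, A a /\ forall a', A a' -> sqd x a <= sqd x a'.
Proof.
move=> A0 cA.
have [c cA' hc] := compact_EVT_min A0 cA (continuous_subspaceT (@sqd_cont R p x)).
exists c; split; first by rewrite inE in cA'.
by move=> a' Aa'; apply: hc; rewrite inE.
Qed.

Lemma setdist_sq (R : realType) (p : nat) (A : set 'rV[R]_p) (x a : 'rV[R]_p) :
  A a -> (forall a', A a' -> sqd x a <= sqd x a') -> setdist x A ^+ 2 = sqd x a.
Proof.
move=> Aa ha.
suff -> : setdist x A = Num.sqrt (sqd x a) by rewrite sqr_sqrtr // sqd_ge0.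
apply/le_anti/andP; split.
  apply: ge_inf; last by exists a.
  by exists 0 => _ [y _ <-]; exact: sqrtr_ge0.
apply: lb_le_inf; first by exists (Num.sqrt (sqd x a)), a.
move=> _ [y Ay <-]; change (Num.sqrt (sqd x a) <= Num.sqrt (sqd x y)).
by rewrite ler_sqrt ?sqd_ge0 //; apply: ha.
Qed.

Lemma sqd_ident (R : realType) (p : nat) (x y a b : 'rV[R]_p) :
  (sqd y a - sqd y b) - (sqd x a - sqd x b) =
  2 * \sum_(j < p) (y ord0 j - x ord0 j) * (b ord0 j - a ord0 j).
Proof.
rewrite /sqd mulr_sumr -!sumrB; apply: eq_bigr => j _; ring.
Qed.

Lemma term_bound (R : realType) (d u w e : R) :
  `|u - w| <= 2 * e -> d * u <= d * w + 2 * e * `|d|.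
Proof.
move=> h.
have : d * u - d * w <= 2 * e * `|d|.
  rewrite -mulrBr; apply: le_trans (ler_norm _) _.
  by rewrite normrM mulrC ler_wpM2r.
lra.
Qed.

Lemma cell_bound (R : realType) (a e : R) : 0 < e ->
  `|a - (Num.floor (a / e))%:~R * e| <= e.
Proof.
move=> e0.
have h1 := floor_le (a / e); have h2 := floorD1_gt (a / e).
rewrite intrD in h2.
set k : R := (Num.floor (a / e))%:~R in h1 h2 *.
move: h1; rewrite ler_pdivlMr // => h1.
move: h2; rewrite ltr_pdivrMr // mulrDl mul1r => h2.
rewrite ler_norml; apply/andP; split; lra.
Qed.

Theorem mainTheorem17 (R : realType) (p : nat) (A B : set 'rV[R]_p) (C : R) :
  A !=set0 -> B !=set0 ->
  compact A -> compact B -> A `&` B = set0 ->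
  lebesgue_null A -> lebesgue_null B ->
  lebesgue_null [set x | setdist x A ^+ 2 - setdist x B ^+ 2 = C].
Proof.
move=> A0 B0 cA cB AB nA nB.
case: p A B A0 B0 cA cB AB nA nB => [|p] A B A0 B0 cA cB AB nA nB.
  exfalso; have h2 : (0 : R) < 1 / 2 by rewrite divr_gt0.
  have [a [b [_ [_ hs]]]] := nA _ h2.
  by have := hs 1%N; rewrite big_ord1 /box_vol big_ord0; lra.
have hp : (0 < p.+1)%N by [].
have /choice [ma hma] : forall x : 'rV[R]_p.+1, exists a, A a /\
    forall a', A a' -> sqd x a <= sqd x a' by move=> x; exact: exists_min.
have /choice [mb hmb] : forall x : 'rV[R]_p.+1, exists b, B b /\
    forall b', B b' -> sqd x b <= sqd x b' by move=> x; exact: exists_min.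
pose f x := setdist x A ^+ 2 - setdist x B ^+ 2.
have hf x : f x = sqd x (ma x) - sqd x (mb x).
  by rewrite /f (setdist_sq _ _ _ _ _ (hma x).1 (hma x).2) (setdist_sq _ _ _ _ _ (hmb x).1 (hmb x).2).
have pair x y : f y - f x <= 2 * \sum_j (y ord0 j - x ord0 j) * (mb y ord0 j - ma x ord0 j).
  rewrite -sqd_ident !hf.
  have h1 := (hma y).2 _ (hma x).1.
  have h2 := (hmb x).2 _ (hmb y).1.
  lra.
pose eta (n : nat) : R := (n.+1%:R)^-1.
have eta0 n : 0 < eta n by rewrite /eta invr_gt0 ltr0Sn.
pose piece (t : (nat * nat * 'I_p.+1 * {ffun 'I_p.+1 -> int} * {ffun 'I_p.+1 -> int})%type)
  : set 'rV[R]_p.+1 :=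
  let: (n, Rn, i, za, zb) := t in
  [set x | f x = C /\ (forall j, `|x ord0 j| <= Rn%:R) /\
     (forall j, `|ma x ord0 j - (za j)%:~R * eta n| <= eta n) /\
     (forall j, `|mb x ord0 j - (zb j)%:~R * eta n| <= eta n) /\
     4 * eta n <= `|(zb i)%:~R * eta n - (za i)%:~R * eta n|].
apply: (@null_sub _ _ _ (\bigcup_t piece t)).
  move=> x fx.
  have [j0 hj0] : exists j0, ma x ord0 j0 != mb x ord0 j0.
    case: (pselect (exists j0, ma x ord0 j0 != mb x ord0 j0)) => // hn; exfalso.
    have eab : ma x = mb x.
      apply/rowP => j; apply/eqP/negPn/negP => hneq; apply: hn; by exists j.
    have : (A `&` B) (ma x) by split; [exact: (hma x).1| rewrite eab; exact: (hmb x).1].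
    by rewrite AB.
  set cd := `|mb x ord0 j0 - ma x ord0 j0|.
  have cd0 : 0 < cd by rewrite /cd normr_gt0 subr_eq0 eq_sym.
  set n := Num.trunc (6 / cd).
  have h6 : 6 * eta n < cd.
    have := truncnS_gt (6 / cd); rewrite ltr_pdivrMr // => h.
    by rewrite /eta ltr_pdivrMr ?ltr0Sn // mulrC.
  pose Rn := (Num.trunc (\sum_j `|x ord0 j|)).+1.
  pose za : {ffun 'I_p.+1 -> int} := [ffun j => Num.floor (ma x ord0 j / eta n)].
  pose zb : {ffun 'I_p.+1 -> int} := [ffun j => Num.floor (mb x ord0 j / eta n)].
  exists (n, Rn, j0, za, zb) => //=.
  split; first exact: fx.
  split.
    move=> j; apply: le_trans (@single_le_sum R p.+1 j (fun j => `|x ord0 j|) _) _ => //.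
    exact/ltW/truncnS_gt.
  split; first by move=> j; rewrite ffunE; exact: cell_bound.
  split; first by move=> j; rewrite ffunE; exact: cell_bound.
  rewrite !ffunE.
  have := @cell_bound R (ma x ord0 j0) _ (eta0 n); have := @cell_bound R (mb x ord0 j0) _ (eta0 n).
  rewrite !ler_norml => /andP [c1 c2] /andP [c3 c4].
  move: h6; rewrite /cd ltr_normr ler_normr => /orP [] h6; apply/orP; [left|right]; lra.
apply: null_bigcup_count => // [[[[[n Rn] i] za] zb]].
rewrite /piece.
set e := eta n.
pose w j : R := (zb j)%:~R * e - (za j)%:~R * e.
pose M := \sum_j `|w j|.
have M0 : 0 <= M by apply: sumr_ge0 => j _.
have e0 : 0 < e := eta0 n.
apply: (@graph_null _ _ _ i (Rn%:R) ((M + 2 * e) / (2 * e))).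
- by apply: divr_ge0; [apply: addr_ge0 => //; apply: mulr_ge0 => //; exact: ltW|
                      apply: mulr_ge0 => //; exact: ltW].
- by move=> x [_ [hx _]].
move=> x y [fx [_ [hax [hbx hw]]]] [fy [_ [hay [hby _]]]].
pose d j := y ord0 j - x ord0 j.
have I1 : 0 <= \sum_j d j * w j + 2 * e * \sum_j `|d j|.
  have := pair x y; rewrite fx fy subrr => h.
  have h' : 0 <= \sum_j d j * (mb y ord0 j - ma x ord0 j).
    by move: h; rewrite pmulr_rge0.
  apply: le_trans h' _; rewrite mulr_sumr -big_split /=; apply: ler_sum => j _.
  apply: term_bound.
  move: (hby j) (hax j); rewrite /w !ler_norml => /andP [z1 z2] /andP [z3 z4].
  apply/andP; split; lra.
have I2 : 0 <= - \sum_j d j * w j + 2 * e * \sum_j `|d j|.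
  have := pair y x; rewrite fx fy subrr => h.
  have h' : 0 <= \sum_j (x ord0 j - y ord0 j) * (mb x ord0 j - ma y ord0 j).
    by move: h; rewrite pmulr_rge0.
  apply: le_trans h' _; rewrite mulr_sumr -sumrN -big_split /=; apply: ler_sum => j _.
  have -> : x ord0 j - y ord0 j = - d j by rewrite /d opprB.
  rewrite -mulNr -(normrN (d j)); apply: term_bound.
  move: (hbx j) (hay j); rewrite /w !ler_norml => /andP [z1 z2] /andP [z3 z4].
  apply/andP; split; lra.
rewrite -/(d i).
have -> : \sum_(j | j != i) `|y ord0 j - x ord0 j| = \sum_(j | j != i) `|d j| by [].
set P := \sum_(j | j != i) `|d j|.
have P0 : 0 <= P by apply: sumr_ge0.
have hS : \sum_j `|d j| = `|d i| + P by rewrite (bigD1 i).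
have hT : \sum_j d j * w j = d i * w i + \sum_(j | j != i) d j * w j by rewrite (bigD1 i).
set T := \sum_(j | j != i) d j * w j in hT.
have TM : `|T| <= M * P.
  apply: le_trans (ler_norm_sum _ _ _) _.
  rewrite /P mulr_sumr; apply: ler_sum => j _.
  rewrite normrM mulrC ler_wpM2r //.
  exact: (@single_le_sum R p.+1 j (fun j => `|w j|)).
have hdw : `|d i * w i| <= 2 * e * (`|d i| + P) + M * P.
  rewrite -hS ler_norml; move: TM; rewrite ler_norml => /andP [t1 t2].
  apply/andP; split; lra.
move: hdw; rewrite normrM => hdw.
have h4 : 4 * e * `|d i| <= `|d i| * `|w i|.
  by rewrite mulrC ler_wpM2l.
rewrite mulrAC ler_pdivlMr; last by rewrite mulr_gt0.
nra.
Qed.
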